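(* Let $\mathcal F\subseteq 2^{[n]}\setminus\{\emptyset\}$ be a hypergraph which is connected on $[n]$, and let $\widehat{\mathcal F}$ be its building closure. Then $\mathcal F$ is tight if and only if for every $X\in\widehat{\mathcal F}\setminus\{[n]\}$: (1) $\mathcal F_X$ is connected as a hypergraph on $X$, and (2) $\mathcal F^X$ is connected as a hypergraph on $[n]\setminus X$. Moreover condition (1) holds automatically for every $X\in\widehat{\mathcal F}$.
   Context: A building set on $[n]$ is a family $\mathcal B$ of nonempty subsets of $[n]$ containing all singletons and such that $I,J\in\mathcal B$, $I\cap J\neq\emptyset$ imply $I\cup J\in\mathcal B$. The building closure $\widehat{\mathcal F}$ of a hypergraph $\mathcal F$ is the unique minimal building set containing $\mathcal F$. For $X\subseteq[n]$: $\mathcal F_X=\{F\in\mathcal F:F\subseteq X\}$ and $\mathcal F^X=\{F\setminus X: F\in\mathcal F, F\setminus X\neq\emptyset\}$. A hypergraph $\mathcal H$ on a vertex set $S$ is connected if for any $x,y\in S$ there is a sequence $x=z_1,\dots,z_k=y$ in $S$ with each $\{z_i,z_{i+1}\}$ contained in some member of $\mathcal H$. For $F\subseteq[n]$ let $\Delta_F=\mathrm{Conv}\{e_i:i\in F\}$ and $\Delta_{\mathcal F}=\sum_{F\in\mathcal F}\Delta_F$ (Minkowski sum). Writing $\phi_X(x)=\sum_{i\in X}x_i$, one has (known result) $\Delta_{\mathcal F}=\{x\in\mathbb{R}^n:\phi_{[n]}(x)=|\mathcal F|,\ \phi_X(x)\ge|\mathcal F_X| \text{ for all } X\in\widehat{\mathcal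 F}\}$. $\mathcal F$ is called tight (an irredundant basis of $\widehat{\mathcal F}$) if every inequality $\phi_X(x)\ge|\mathcal F_X|$, $X\in\widehat{\mathcal F}\setminus\{[n]\}$, in this description is irredundant (facet-defining). *)

(* Defs.v *)
From HB Require Import structures.
From mathcomp Require Import all_boot all_order all_algebra.
Set Implicit Arguments. Unset Strict Implicit. Unset Printing Implicit Defensive.
Import Order.TTheory GRing.Theory Num.Theory.

Definition is_building (n : nat) (B : {set {set 'I_n}}) : bool :=
  [&& set0 \notin B,
      [forall i : 'I_n, [set i] \in B] &
      [forall I in B, forall J in B, (I :&: J != set0) ==> (I :|: J \in B)]].

Definition building_closure (n : nat) (FF : {set {set 'I_n}}) : {set {set 'I_n}} :=
  \bigcap_(B | is_building B && (FF \subset B)) B.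

Definition restr (n : nat) (FF : {set {set 'I_n}}) (X : {set 'I_n}) : {set {set 'I_n}} :=
  [set F in FF | F \subset X].

Definition contr (n : nat) (FF : {set {set 'I_n}}) (X : {set 'I_n}) : {set {set 'I_n}} :=
  [set F :\: X | F in [set F in FF | F :\: X != set0]].

Definition hconnected (n : nat) (H : {set {set 'I_n}}) (S : {set 'I_n}) : Prop :=
  forall x y, x \in S -> y \in S ->
    exists s : seq 'I_n,
      [/\ all (fun z => z \in S) s,
          path (fun a b => [exists E in H, (a \in E) && (b \in E)]) x s &
          last x s = y].

Local Open Scope ring_scope.

Definition phi (R : realFieldType) (n : nat) (X : {set 'I_n}) (x : 'I_n -> R) : R :=
  \sum_(i in X) x i.

(* Tightness: each inequality phi_X(x) >= |F_X|, X in closure \ {[n]}, of the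
   description Delta_F = {phi_[n] = |F|, phi_Y >= |F_Y| (Y in closure)} is
   irredundant: dropping it strictly enlarges the solution set, i.e. some x
   satisfies the equation and all the other inequalities but violates it. *)
Definition tight (R : realFieldType) (n : nat) (FF : {set {set 'I_n}}) : Prop :=
  forall X, X \in building_closure FF -> X != setT ->
    exists x : 'I_n -> R,
      [/\ phi setT x = #|FF|%:R,
          (forall Y, Y \in building_closure FF -> Y != X ->
             #|restr FF Y|%:R <= phi Y x) &
          phi X x < #|restr FF X|%:R].

(* Main.v *)
Require Import Defs.
From HB Require Import structures.
From mathcomp Require Import all_boot all_order all_algebra.
From Stdlib Require Import ClassicalEpsilon Classical.
From mathcomp Require Import lra.
Set Implicit Arguments. Unset Strict Implicit. Unset Printing Implicit Defensive.
Import Order.TTheory GRing.Theory Num.Theory.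

Section Gen.
Variable n : nat.
Implicit Types (H : {set {set 'I_n}}) (S X Y Z : {set 'I_n}).

Definition edg H := (fun a b : 'I_n => [exists E in H, (a \in E) && (b \in E)]).

Definition pc H S (x y : 'I_n) : Prop :=
  exists s : seq 'I_n, [/\ all (fun z => z \in S) s, path (edg H) x s & last x s = y].

Lemma hconnE H S : hconnected H S <-> forall x y, x \in S -> y \in S -> pc H S x y.
Proof. by []. Qed.

Lemma pc_refl H S x : pc H S x x.
Proof. by exists [::]. Qed.

Lemma pc_edge H S x y z : pc H S x y -> edg H y z -> z \in S -> pc H S x z.
Proof.
case=> s [Ha Hp Hl] He Hz; exists (rcons s z); split.
- by rewrite all_rcons Hz.
- by rewrite rcons_path Hp Hl.
- by rewrite last_rcons.
Qed.

Lemma pc_cons H S x y z : edg H x y -> y \in S -> pc H S y z -> pc H S x z.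
Proof.
move=> He Hy [s [Ha Hp Hl]]; exists (y :: s); split => //=.
- by rewrite Hy.
- by rewrite He.
Qed.

Lemma pc_trans H S x y z : pc H S x y -> pc H S y z -> pc H S x z.
Proof.
move=> [s1 [Ha1 Hp1 Hl1]] [s2 [Ha2 Hp2 Hl2]]; exists (s1 ++ s2); split.
- by rewrite all_cat Ha1.
- by rewrite cat_path Hp1 Hl1.
- by rewrite last_cat Hl1.
Qed.

Lemma edg_sym H a b : edg H a b = edg H b a.
Proof.
apply/existsP/existsP => -[E /andP[HE /andP[h1 h2]]]; exists E; by rewrite HE h1 h2.
Qed.

Lemma pc_sym H S x y : x \in S -> pc H S x y -> pc H S y x.
Proof.
move=> Hx [s [Ha Hp Hl]]; elim: s x Hx Ha Hp Hl => [|z s IH] x Hx /=.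
  by move=> _ _ <-; apply: pc_refl.
move=> /andP[Hz Ha] /andP[He Hp] Hl.
apply: pc_edge (IH z Hz Ha Hp Hl) _ Hx.
by rewrite edg_sym.
Qed.

Lemma pc_mono H H' S S' x y : H \subset H' -> S \subset S' -> pc H S x y -> pc H' S' x y.
Proof.
move=> sH sS [s [Ha Hp Hl]]; exists s; split => //.
- by apply: sub_all Ha => z Hz; apply: (subsetP sS).
- apply: sub_path Hp => a b /existsP[E /andP[HE h]]; apply/existsP; exists E.
  by rewrite (subsetP sH _ HE).
Qed.

Lemma pc_cross H S Y x y : pc H S x y -> x \in Y -> y \notin Y ->
  exists E, E \in H /\ exists p q, [/\ p \in E, q \in E, p \in Y & q \notin Y].
Proof.
move=> [s [_ Hp Hl]]; elim: s x Hp Hl => [|z s IH] x /=.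
  by move=> _ -> ->.
move=> /andP[He Hp] Hl Hx Hy.
case Hz: (z \in Y); first by apply: (IH z).
move: He => /existsP[E /andP[HE /andP[h1 h2]]].
by exists E; split => //; exists x, z; rewrite Hz.
Qed.


Definition dec (P : Prop) : bool := if excluded_middle_informative P then true else false.
Lemma decP P : reflect P (dec P).
Proof. by rewrite /dec; case: excluded_middle_informative => h; constructor. Qed.

Lemma buildingP (B : {set {set 'I_n}}) : is_building B ->
  [/\ set0 \notin B, forall i, [set i] \in B &
      forall I J, I \in B -> J \in B -> I :&: J != set0 -> I :|: J \in B].
Proof.
case/and3P=> h0 /forallP h1 /forall_inP h2; split => // I J HI HJ HIJ.
by move/forall_inP: (h2 I HI) => /(_ J HJ) /implyP; apply.
Qed.

Section Clo.
Variable FF : {set {set 'I_n}}.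
Hypothesis Hne : set0 \notin FF.

Lemma closureP X : reflect (forall B : {set {set 'I_n}}, is_building B -> FF \subset B -> X \in B)
   (X \in building_closure FF).
Proof.
apply: (iffP bigcapP) => h B.
- by move=> hB hF; apply: h; rewrite hB.
- by case/andP; apply: h.
Qed.

Definition DD := [set Y : {set 'I_n} | (Y != set0) && dec (hconnected (restr FF Y) Y)].

Lemma restr_sub Y Y' : Y \subset Y' -> restr FF Y \subset restr FF Y'.
Proof.
move=> sY; apply/subsetP => E; rewrite !inE => /andP[-> h] /=.
exact: subset_trans h sY.
Qed.

Lemma DD_building : is_building DD.
Proof.
apply/and3P; split.
- by rewrite inE eqxx.
- apply/forallP => i; rewrite inE; apply/andP; split.
    by apply/set0Pn; exists i; rewrite inE.
  apply/decP => x y; rewrite !inE => /eqP -> /eqP ->; exact: pc_refl.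
- apply/forall_inP => I; rewrite inE => /andP[hI /decP cI].
  apply/forall_inP => J; rewrite inE => /andP[hJ /decP cJ].
  apply/implyP => /set0Pn [z]; rewrite inE => /andP[zI zJ].
  rewrite inE; apply/andP; split.
    by apply/set0Pn; exists z; rewrite inE zI.
  apply/decP => x y Hx Hy.
  have hz : forall w, w \in I :|: J -> pc (restr FF (I :|: J)) (I :|: J) z w.
    move=> w; rewrite inE => /orP [wI|wJ].
    + apply: pc_mono (cI z w zI wI); [apply: restr_sub|]; exact: subsetUl.
    + apply: pc_mono (cJ z w zJ wJ); [apply: restr_sub|]; exact: subsetUr.
  apply: pc_trans (hz y Hy); apply: pc_sym (hz x Hx).
  by rewrite inE zI.
Qed.

Lemma FF_DD : FF \subset DD.
Proof.
apply/subsetP => F HF; rewrite inE; apply/andP; split.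
  by apply: contraNneq Hne => <-.
apply/decP => x y Hx Hy; exists [:: y]; split => /=.
- by rewrite Hy.
- rewrite andbT; apply/existsP; exists F; rewrite Hx Hy inE HF subxx.
  by [].
- by [].
Qed.

Lemma closure_conn X : X \in building_closure FF ->
  X != set0 /\ hconnected (restr FF X) X.
Proof.
move/closureP => /(_ DD DD_building FF_DD); rewrite inE => /andP[h /decP c].
by [].
Qed.

Lemma conn_closure Y : Y != set0 -> hconnected (restr FF Y) Y ->
  Y \in building_closure FF.
Proof.
move=> /set0Pn [y0 Hy0] hc; apply/closureP => B hB hF.
case: (buildingP hB) => _ h1 h2.
have step : forall v, v \in Y -> exists Z, [/\ Z \in B, y0 \in Z, v \in Z & Z \subset Y].
  move=> v Hv; case: (hc y0 v Hy0 Hv) => s [Ha Hp Hl].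
  rewrite -Hl {Hl Hv}.
  elim/last_ind: s Ha Hp => [|s z IH] /=.
    move=> _ _; exists [set y0]; split => //; rewrite ?inE //.
    by apply/subsetP => w; rewrite inE => /eqP ->.
  rewrite all_rcons rcons_path last_rcons => /andP[Hz Ha] /andP[Hp He].
  case: (IH Ha Hp) => Z [ZB y0Z lZ sZ].
  case/existsP: He => E /and3P[]; rewrite inE => /andP[EF sE] h3 h4.
  exists (Z :|: E); split.
  - apply: h2 => //; first exact: (subsetP hF).
    by apply/set0Pn; exists (last y0 s); rewrite inE lZ.
  - by rewrite inE y0Z.
  - by rewrite inE h4 orbT.
  - by rewrite subUset sZ.
have big : forall l : seq 'I_n, {subset l <= Y} ->
    exists Z, [/\ Z \in B, y0 \in Z, {subset l <= Z} & Z \subset Y].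
  elim => [|v l IH] sl.
    exists [set y0]; split => //; rewrite ?inE //.
    by apply/subsetP => w; rewrite inE => /eqP ->.
  case: (IH (fun w h => sl w ltac:(by rewrite inE h orbT))) => Z [ZB y0Z lZ sZ].
  case: (step v (sl v (mem_head _ _))) => W [WB y0W vW sW].
  exists (Z :|: W); split.
  - by apply: h2 => //; apply/set0Pn; exists y0; rewrite inE y0Z.
  - by rewrite inE y0Z.
  - move=> w; rewrite inE => /orP[/eqP ->|wl]; rewrite inE ?vW ?orbT //.
    by rewrite lZ.
  - by rewrite subUset sZ.
case: (big (enum Y) (fun w => ltac:(by rewrite mem_enum))) => Z [ZB _ lZ sZ].
suff -> : Y = Z by [].
apply/eqP; rewrite eqEsubset sZ andbT; apply/subsetP => w wY.
by apply: lZ; rewrite mem_enum.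
Qed.


Hypothesis Hconn : hconnected FF setT.

Definition clos X S := forall F, F \in FF -> forall w1 w2,
  w1 \in F :\: X -> w2 \in F :\: X -> w1 \in S -> w2 \in S.

Lemma union_closure X S : X \in building_closure FF ->
  (forall i, i \in S -> i \notin X) -> clos X S -> X :|: S \in building_closure FF.
Proof.
move=> XC sS cS; case: (closure_conn XC) => /set0Pn [x0 Hx0] cX.
apply: conn_closure; first by apply/set0Pn; exists x0; rewrite inE Hx0.
set Y := X :|: S.
have toX : forall y, y \in Y -> exists2 x', x' \in X & pc (restr FF Y) Y y x'.
  move=> y; rewrite inE => /orP[yX|yS]; first by exists y => //; apply: pc_refl.
  case: (Hconn (in_setT y) (in_setT x0)) => s [_ Hp Hl].
  elim: s y yS Hp Hl => [|z s IH] y yS /=.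
    by move=> _ Hl; move: (sS y yS); rewrite Hl Hx0.
  move=> /andP[He Hp] Hl.
  case/existsP: He => F /and3P[HF yF zF].
  have yFX : y \in F :\: X by rewrite inE yF sS.
  have FY : F \subset Y.
    apply/subsetP => w wF; rewrite inE; case wX: (w \in X) => //=.
    by apply: (cS F HF y w) => //; rewrite inE wX wF.
  have eYz : edg (restr FF Y) y z.
    by apply/existsP; exists F; rewrite inE HF FY yF zF.
  case zX: (z \in X).
    exists z => //; apply: (pc_cons eYz); last exact: pc_refl.
    by rewrite inE zX.
  have zS : z \in S by apply: (cS F HF y z) => //; rewrite inE zX zF.
  case: (IH z zS Hp Hl) => x' x'X hz; exists x' => //.
  by apply: (pc_cons eYz) hz; rewrite inE zS orbT.
move=> a b Ha Hb.
case: (toX a Ha) => xa xaX pa; case: (toX b Hb) => xb xbX pb.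
apply: pc_trans pa _; apply: pc_trans (pc_sym Hb pb).
apply: pc_mono (cX xa xb xaX xbX); [apply: restr_sub|]; exact: subsetUl.
Qed.

Local Open Scope ring_scope.
Lemma forward (R : realFieldType) X S (x : 'I_n -> R) :
  X \in building_closure FF -> X != setT ->
  (forall i, i \in S -> i \notin X) -> clos X S -> S != set0 -> ~: X :\: S != set0 ->
  phi setT x = #|FF|%:R ->
  (forall Y, Y \in building_closure FF -> Y != X -> (#|restr FF Y|%:R <= phi Y x)%R) ->
  (#|restr FF X|%:R <= phi X x)%R.
Proof.
move=> XC XT sS cS S0 S20 hT hY.
set S2 := ~: X :\: S.
have sS2 : forall i, i \in S2 -> i \notin X by move=> i; rewrite !inE => /andP[_ ->].
have cS2 : clos X S2.
  move=> F HF w1 w2 h1 h2; rewrite !inE => /andP[nS nX].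
  move: (h2); rewrite inE => /andP[-> _]; rewrite andbT.
  by apply: contra nS; apply: (cS F HF w2 w1).
have Y1C := union_closure XC sS cS.
have Y2C := union_closure XC sS2 cS2.
have neq : forall T, T != set0 -> (forall i, i \in T -> i \notin X) -> X :|: T != X.
  move=> T /set0Pn [t tT] sT; apply/eqP => /setP /(_ t).
  by rewrite inE tT orbT (negbTE (sT t tT)).
have h1 := hY _ Y1C (neq _ S0 sS).
have h2 := hY _ Y2C (neq _ S20 sS2).
have Hc : (#|restr FF (X :|: S)| + #|restr FF (X :|: S2)| = #|restr FF X| + #|FF|)%N.
  rewrite -cardsUI addnC.
  have EI : restr FF (X :|: S) :&: restr FF (X :|: S2) = restr FF X.
    apply/setP => F; rewrite !inE; apply/idP/idP.
      case/andP => /andP[HF s1] /andP[_ s2]; rewrite HF /=.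
      apply/subsetP => v vF; move: (subsetP s1 v vF) (subsetP s2 v vF).
      by rewrite !inE; case: (v \in X); case: (v \in S).
    case/andP => HF sX; rewrite HF /= !(subset_trans sX (subsetUl _ _)).
    by [].
  suff EU : restr FF (X :|: S) :|: restr FF (X :|: S2) = FF.
    by rewrite EI EU addnC.
  apply/setP => F; rewrite !inE; apply/idP/idP.
      by case/orP => /andP[].
    move=> HF; rewrite HF /=.
    case: (boolP (F :\: X == set0)) => [/eqP e|/set0Pn [w wFX]].
      have sFX : F \subset X by rewrite -setD_eq0 e.
      by rewrite (subset_trans sFX (subsetUl _ _)).
    have allin : forall T, clos X T -> w \in T -> F \subset X :|: T.
      move=> T cT wT; apply/subsetP => v vF; rewrite inE; case vX: (v \in X) => //=.
      by apply: (cT F HF w v) => //; rewrite inE vX vF.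
    case wS: (w \in S); first by rewrite allin.
    rewrite (allin S2) ?orbT //; move: wFX; rewrite !inE wS => /andP[-> _].
    by [].
have Hp : (phi (X :|: S) x + phi (X :|: S2) x = phi X x + phi setT x)%R.
  rewrite /phi (big_setID (A := setT) (X :|: S)) (big_setID (A := X :|: S2) X).
  have e1 : setT :&: (X :|: S) = X :|: S by rewrite setTI.
  have e2 : (X :|: S2) :&: X = X by apply/setIidPr; apply: subsetUl.
  have e3 : setT :\: (X :|: S) = S2.
    apply/setP => i; rewrite !inE; case: (i \in X) => //=; by case: (i \in S).
  have e4 : (X :|: S2) :\: X = S2.
    apply/setP => i; rewrite !inE; case: (i \in X) => //=; by case: (i \in S).
  rewrite e1 e2 e3 e4; rewrite addrA [in RHS]addrA; congr (_ + _)%R.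
  by rewrite addrC.
have : ((#|restr FF X| + #|FF|)%:R <= phi X x + phi setT x)%R.
  rewrite -Hc natrD -Hp; exact: lerD.
by rewrite hT natrD lerD2r.
Qed.


Local Close Scope ring_scope.
Section Back.
Variables (X : {set 'I_n}) (a b : 'I_n).
Hypotheses (aX : a \notin X) (bX : b \in X).
Hypotheses (cX : hconnected (restr FF X) X) (cCX : hconnected (contr FF X) (~: X)).

Definition dflt (F : {set 'I_n}) : 'I_n :=
  if [pick i in F :\: X] is Some i then i else
  if [pick i in F] is Some i then i else b.

Definition witP (Y : {set 'I_n}) (p : {set 'I_n} * 'I_n) : bool :=
  [&& p.1 \in FF, p.2 \in p.1, p.2 \in Y, ~~ (p.1 \subset Y) &
      (p.2 \in X) ==> (p.1 \subset X)].

Definition gg (Y F : {set 'I_n}) : 'I_n :=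
  if [pick p | witP Y p] is Some p then (if F == p.1 then p.2 else dflt F) else dflt F.

Definition cnt (Y Z : {set 'I_n}) : nat := \sum_(F in FF) (gg Y F \in Z).

Lemma dflt_in F : F \in FF -> dflt F \in F.
Proof.
move=> HF; rewrite /dflt; case: pickP => [i|_]; first by rewrite inE => /andP[].
case: pickP => [i //|h]; exfalso; move: Hne; apply/negP/negPn.
suff e : F = set0 by rewrite -e.
by apply/setP => i; rewrite inE h.
Qed.

Lemma dflt_X F : dflt F \in X -> F \subset X.
Proof.
rewrite /dflt; case: pickP => [i|h]; first by rewrite inE => /andP[/negbTE ->].
move=> _; apply/subsetP => i iF; move: (h i); rewrite inE iF andbT.
by move/negbT; rewrite negbK.
Qed.

Lemma gg_in Y F : F \in FF -> gg Y F \in F.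
Proof.
move=> HF; rewrite /gg; case: pickP => [p|_]; last exact: dflt_in.
case/and5P => _ h2 _ _ _; case: eqP => [->|_] //; exact: dflt_in.
Qed.

Lemma gg_X Y F : gg Y F \in X -> F \subset X.
Proof.
rewrite /gg; case: pickP => [p|_]; last exact: dflt_X.
case/and5P => _ _ _ _ /implyP h; case: eqP => [->|_] //; exact: dflt_X.
Qed.

Lemma card_restr Z : #|restr FF Z| = \sum_(F in FF) (F \subset Z).
Proof.
rewrite -sum1_card (big_mkcond (fun F => F \in restr FF Z)) /=.
rewrite [RHS](big_mkcond (fun F => F \in FF)) /=.
by apply: eq_bigr => F _; rewrite inE; case: (F \in FF); case: (F \subset Z).
Qed.

Lemma pt_ge Y Z F : F \in FF -> ((F \subset Z) : nat) <= (gg Y F \in Z).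
Proof.
move=> HF; case sF: (F \subset Z) => //=; by rewrite (subsetP sF _ (gg_in Y HF)).
Qed.

Lemma cnt_ge Y Z : #|restr FF Z| <= cnt Y Z.
Proof. rewrite card_restr; apply: leq_sum => F HF; exact: pt_ge. Qed.

Lemma cnt_X Y : cnt Y X = #|restr FF X|.
Proof.
rewrite card_restr; apply: eq_bigr => F HF.
case h: (gg Y F \in X); first by rewrite (gg_X h).
case sF: (F \subset X) => //; by rewrite (subsetP sF _ (gg_in Y HF)) in h.
Qed.

Lemma cnt_T Y : cnt Y setT = #|FF|.
Proof. by rewrite /cnt -sum1_card; apply: eq_bigr => F _; rewrite inE. Qed.

Lemma cnt_wit Y p : witP Y p -> #|restr FF Y| < cnt Y Y.
Proof.
move=> hp.
case E: [pick p0 | witP Y p0] => [q|]; last by move: E; case: pickP => // /(_ p); rewrite hp.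
have hq : witP Y q by move: E; case: pickP => // q' hq' [<-].
have gq : gg Y q.1 = q.2 by rewrite /gg E eqxx.
case/and5P: hq => h1 h2 h3 /negbTE h4 _.
rewrite card_restr /cnt (bigD1 q.1) //= [X in _ < X](bigD1 q.1) //= gq h3 h4 add0n add1n ltnS.
apply: leq_sum => F /andP[HF _]; exact: pt_ge.
Qed.

Lemma relevant Y : Y != X -> b \in Y -> a \notin Y -> exists p, witP Y p.
Proof.
move=> YX bY aY.
case: (boolP (X \subset Y)) => [sXY|/subsetPn [c cXc cY]].
- have : ~~ (Y \subset X) by apply: contra YX => sYX; rewrite eqEsubset sYX.
  case/subsetPn => c cY cXc.
  have ca : pc (contr FF X) (~: X) c a by apply: cCX; rewrite inE.
  case: (pc_cross ca cY aY) => E [] /imsetP [F] + ->.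
  rewrite inE => /andP[HF _] [p [q [pE qE pY qY]]].
  move: pE qE; rewrite !inE => /andP[pX pF] /andP[_ qF].
  exists (F, p); rewrite /witP /= HF pF pY (negbTE pX) /=.
  by rewrite andbT; apply/negP => /subsetP hh; move: (hh q qF); rewrite (negbTE qY).
- have bc : pc (restr FF X) X b c by apply: cX.
  case: (pc_cross bc bY cY) => E [] + [p [q [pE qE pY qY]]].
  rewrite inE => /andP[HE sE].
  exists (E, p); rewrite /witP /= HE pE pY sE implybT andbT /=.
  by apply/negP => /subsetP hh; move: (hh q qE); rewrite (negbTE qY).
Qed.

Lemma ind_sum (A : {set 'I_n}) (c : 'I_n) : \sum_(i in A) ((c == i) : nat) = (c \in A).
Proof.
case cA: (c \in A).
  rewrite (bigD1 c) //= eqxx big1 // => i /andP[_ ]; by rewrite eq_sym => /negbTE ->.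
by rewrite big1 // => i iA; case: eqP => // ci; rewrite ci iA in cA.
Qed.

Lemma sum_cnt Y Z : \sum_(i in Z) cnt Y [set i] = cnt Y Z.
Proof.
rewrite /cnt exchange_big /=; apply: eq_bigr => F _.
rewrite -ind_sum; apply: eq_bigr => i _; by rewrite inE.
Qed.

Definition NN := #|{: {set 'I_n}}|.
Definition tot (Z : {set 'I_n}) : nat := \sum_(Y : {set 'I_n}) cnt Y Z.

Lemma tot_ge Z : NN * #|restr FF Z| <= tot Z.
Proof.
rewrite /tot /NN -sum_nat_const; apply: leq_sum => Y _; exact: cnt_ge.
Qed.

Lemma tot_gt Z : Z != X -> b \in Z -> a \notin Z -> NN * #|restr FF Z| < tot Z.
Proof.
move=> h1 h2 h3; case: (relevant h1 h2 h3) => p hp.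
rewrite /tot /NN -sum_nat_const (bigD1 Z) //= [X in _ < X](bigD1 Z) //=.
rewrite -addSn; apply: leq_add; first exact: (cnt_wit hp).
apply: leq_sum => Y _; exact: cnt_ge.
Qed.

Lemma tot_X : tot X = NN * #|restr FF X|.
Proof.
rewrite /tot /NN -sum_nat_const; apply: eq_bigr => Y _; exact: cnt_X.
Qed.

Lemma tot_T : tot setT = NN * #|FF|.
Proof.
rewrite /tot /NN -sum_nat_const; apply: eq_bigr => Y _; exact: cnt_T.
Qed.

Lemma sum_tot Z : \sum_(i in Z) tot [set i] = tot Z.
Proof.
rewrite /tot exchange_big /=; apply: eq_bigr => Y _; exact: sum_cnt.
Qed.

Local Open Scope ring_scope.

Lemma NN_gt0 : (0 < NN)%N.
Proof. by apply/card_gt0P; exists set0. Qed.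

Section Vec.
Variable R : realFieldType.
Definition xx (i : 'I_n) : R :=
  ((tot [set i])%:R + (i == a)%:R - (i == b)%:R) / NN%:R.

Lemma phi_xx Z : phi Z xx = ((tot Z)%:R + (a \in Z)%:R - (b \in Z)%:R) / NN%:R.
Proof.
rewrite /phi /xx -mulr_suml; congr (_ * _).
rewrite sumrB big_split /= -!natr_sum sum_tot -!ind_sum.
by congr (_ + (_)%:R - (_)%:R); apply: eq_bigr => i _; rewrite eq_sym.
Qed.

Lemma backward : [/\ phi setT xx = #|FF|%:R,
   (forall Y, Y != X -> #|restr FF Y|%:R <= phi Y xx) &
   phi X xx < #|restr FF X|%:R].
Proof.
have N0 : (0 : R) < NN%:R by rewrite ltr0n NN_gt0.
split.
- rewrite phi_xx tot_T !inE /= mulnC natrM.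
  have -> : (#|FF|%:R * NN%:R + 1%:R - 1%:R : R) = #|FF|%:R * NN%:R by lra.
  by rewrite mulfK // gt_eqF.
- move=> Y YX; rewrite phi_xx ler_pdivlMr // -natrM mulnC.
  case: (boolP ((b \in Y) && (a \notin Y))) => [/andP[bY aY]|h].
    have : (NN * #|restr FF Y| + 1 <= tot Y)%N by rewrite addn1; exact: tot_gt.
    rewrite -(ler_nat R) natrD (negbTE aY) bY /=.
    move=> h1; lra.
  have := tot_ge Y; rewrite -(ler_nat R) => h1.
  have h2 : (0 : R) <= (a \in Y)%:R - (b \in Y)%:R.
    by move: h; case: (a \in Y); case: (b \in Y) => //= _; lra.
  lra.
- rewrite phi_xx ltr_pdivrMr // -natrM mulnC tot_X (negbTE aX) bX /=; lra.
Qed.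
End Vec.

End Back.
End Clo.
End Gen.

Theorem mainTheorem8 (R : realFieldType) (n : nat) (FF : {set {set 'I_n}})
  (Hne : set0 \notin FF) (Hconn : hconnected FF setT) :
  (tight R FF <->
     (forall X, X \in building_closure FF -> X != setT ->
        hconnected (restr FF X) X /\ hconnected (contr FF X) (~: X)))
  /\ (forall X, X \in building_closure FF -> hconnected (restr FF X) X).
Proof.
split; last by move=> X XC; case: (closure_conn Hne XC).
split.
- move=> Ht X XC XT; split; first by case: (closure_conn Hne XC).
  case: (excluded_middle_informative (hconnected (contr FF X) (~: X))) => // hnc.
  exfalso.
  have [u [v [uX vX nuv]]] : exists u v, [/\ u \in ~: X, v \in ~: X &
      ~ pc (contr FF X) (~: X) u v].
    apply: Classical_Prop.NNPP => hn; apply: hnc => u v hu hv.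
    apply: Classical_Prop.NNPP => hp; apply: hn; by exists u, v.
  set S1 := [set w | (w \in ~: X) && dec (pc (contr FF X) (~: X) u w)].
  have sS : forall i, i \in S1 -> i \notin X.
    by move=> i; rewrite !inE => /andP[].
  have cS : clos FF X S1.
    move=> F HF w1 w2 h1 h2; rewrite !inE => /andP[_ /decP p1].
    move: (h2); rewrite !inE => /andP[w2X _]; rewrite w2X /=.
    apply/decP; apply: (pc_edge p1); last by rewrite inE.
    apply/existsP; exists (F :\: X); rewrite h1 h2 !andbT /contr.
    apply/imsetP; exists F => //; rewrite inE HF /=.
    by apply/set0Pn; exists w1.
  have S0 : S1 != set0.
    apply/set0Pn; exists u; rewrite inE uX /=; apply/decP; exact: pc_refl.
  have S20 : ~: X :\: S1 != set0.
    apply/set0Pn; exists v; rewrite !inE; move: (vX); rewrite inE => ->.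
    rewrite andbT; apply/negP => /andP[_ /decP]; exact: nuv.
  case: (Ht X XC XT) => x [hT hY hX].
  have := forward Hne Hconn XC XT sS cS S0 S20 hT hY.
  by rewrite leNgt hX.
- move=> H X XC XT; case: (H X XC XT) => cX cCX.
  case: (closure_conn Hne XC) => /set0Pn [b bX] _.
  have [a aX] : exists a, a \notin X.
    apply: Classical_Prop.NNPP => hn; move/negP: XT; apply; apply/eqP/setP => i.
    rewrite inE; apply: Classical_Prop.NNPP => hi; apply: hn; exists i.
    by apply/negP => h; apply: hi; rewrite h.
  case: (backward Hne aX bX cX cCX R) => h1 h2 h3.
  exists (xx FF X a b R); split => // Y _; exact: h2.
Qed.
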